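(* Let $X_1,X_2$ be weakly regular random variables, and for $i=1,2$ let $f_i$ be the density of $X_i$, $G_i(t)=\mathbb{P}[X_i\ge t]$, $H_i(t)=\int_0^tG_i(u)\,\mathrm{d}u$, $r_i=\sup_{p\ge0}p\,\mathbb{P}[X_i\ge p]$, and $K_1(t)=f_2(t)(H_1(t)-r_1)-G_1(t)G_2(t)$, $K_2(t)=f_1(t)(H_2(t)-r_2)-G_1(t)G_2(t)$. Then for $i=1,2$ and all $u\ge0$: if $K_i(u)>0$ then $K_i(v)\ge0$ for all $v>u$.
   Context: A random variable $X\ge0$ is weakly regular if its support is an interval $[\alpha,\beta]$ with $0\le\alpha<\beta\le\infty$ (meaning $[\alpha,\infty)$ if $\beta=\infty$), on which it has a positive continuous density $f$ (and density $0$ outside), such that the virtual valuation $t-G(t)/f(t)$ is nondecreasing on the support, where $G(t)=\mathbb{P}[X\ge t]$. *)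

(* Defs.v *)
From HB Require Import structures.
From mathcomp Require Import all_boot all_order all_algebra.
From mathcomp Require Import all_classical all_reals all_analysis.
Set Implicit Arguments. Unset Strict Implicit. Unset Printing Implicit Defensive.
Import Order.TTheory GRing.Theory Num.Theory.
Import numFieldNormedType.Exports.
Local Open Scope classical_set_scope.
Local Open Scope ring_scope.

Section Defs.
Context {R : realType} {d : measure_display} {T : measurableType d}
  (P : probability T R).

(* the support interval [alpha, beta] (= [alpha, +oo) when beta = +oo) *)
Definition supp_int (alpha : R) (beta : \bar R) : set R :=
  [set x : R | alpha <= x /\ (x%:E <= beta)%E].

Definition tailG (X : T -> R) (t : R) : R := fine (P [set w | t <= X w]).

Definition is_density (X : {RV P >-> R}) (f : R -> R) : Prop :=
  forall A : set R, measurable A ->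
    P (X @^-1` A) = (\int[lebesgue_measure]_(x in A) (f x)%:E)%E.

Definition weakly_regular (X : {RV P >-> R}) (f : R -> R) : Prop :=
  (forall w, 0 <= X w) /\
  exists (alpha : R) (beta : \bar R),
    [/\ 0 <= alpha, (alpha%:E < beta)%E, is_density X f,
        {within supp_int alpha beta, continuous f} &
        [/\ (forall x, supp_int alpha beta x -> 0 < f x),
        (forall x, ~ supp_int alpha beta x -> f x = 0) &
        (forall s t, supp_int alpha beta s -> supp_int alpha beta t -> s <= t ->
           s - tailG X s / f s <= t - tailG X t / f t)]].

Definition cumH (X : T -> R) (t : R) : R :=
  Rintegral lebesgue_measure `[0, t] (tailG X).

Definition max_rev (X : T -> R) : R :=
  sup [set p * tailG X p | p in [set p : R | 0 <= p]].

End Defs.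

(* Main.v *)
Require Import Defs.
From HB Require Import structures.
From mathcomp Require Import all_boot all_order all_algebra.
From mathcomp Require Import all_classical all_reals all_analysis.
From mathcomp Require Import ring lra measurable_realfun.
Import Order.TTheory GRing.Theory Num.Theory.
Import numFieldNormedType.Exports.
Local Open Scope classical_set_scope.
Local Open Scope ring_scope.

Section Helpers.
Context {R : realType} {d : measure_display} {T : measurableType d}
  (P : probability T R).

Lemma tailG_set (X : {RV P >-> R}) t :
  [set w | t <= X w] = X @^-1` `[t, +oo[.
Proof. by apply/seteqP; split => w /=; rewrite in_itv /= andbT. Qed.

Lemma tailG_meas (X : {RV P >-> R}) t : measurable [set w | t <= X w].
Proof. by rewrite tailG_set; apply: measurable_funPTI; exact: measurable_itv. Qed.

Lemma tailG_ge0 (X : {RV P >-> R}) t : 0 <= tailG P X t.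
Proof. by rewrite /tailG fine_ge0. Qed.

Lemma tailG_le1 (X : {RV P >-> R}) t : tailG P X t <= 1.
Proof.
rewrite /tailG -lee_fin fineK ?fin_num_measure ?probability_le1 //;
  exact: tailG_meas.
Qed.

Lemma tailG_noninc (X : {RV P >-> R}) : {homo tailG P X : s t /~ s <= t}.
Proof.
move=> s t st; rewrite /tailG fine_le ?fin_num_measure //; try exact: tailG_meas.
apply: le_measure; rewrite ?inE; try exact: tailG_meas.
by move=> w /= tw; exact: le_trans st tw.
Qed.

Lemma tailG_int (X : {RV P >-> R}) (a b : itv_bound R) :
  (a <= b)%O -> a != -oo%O -> b != +oo%O ->
  lebesgue_measure.-integrable [set` Interval a b] (EFin \o tailG P X).
Proof.
move=> ab ha hb.
apply: measurable_bounded_integrable => //.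
- rewrite /= lebesgue_measure_itv; case: ifP => // _.
  case: a ha {ab} => [ba x|[]] //= _; case: b hb => [bb y|[]] //= _.
  by rewrite -EFinD ltry.
- apply: nonincreasing_measurable => // x y xy; exact: tailG_noninc.
- exists 1; split => // M M1 x _ /=.
  rewrite ger0_norm ?tailG_ge0 //; apply: le_trans (tailG_le1 X x) _.
  exact: ltW.
Qed.

Lemma cumH_incr (X : {RV P >-> R}) s t : 0 <= s -> s <= t ->
  (t - s) * tailG P X t <= cumH P X t - cumH P X s.
Proof.
move=> s0 st; rewrite /cumH.
rewrite (@Rintegral_itvB _ _ (BLeft 0) (BRight t) s); last 3 first.
- by apply: tailG_int; rewrite ?bnd_simp ?(le_trans s0 st).
- by rewrite bnd_simp.
- by rewrite bnd_simp.
apply: le_trans (@le_Rintegral _ _ _ _ _ (cst (tailG P X t)) _ _ _ _ _).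
- rewrite Rintegral_cst //= lebesgue_measure_itv /= lte_fin.
  case: ltgtP st => // [ts|<-] _.
    by rewrite -EFinD /= mulrC.
  by rewrite subrr mul0r mulr0.
- done.
- apply: measurable_bounded_integrable => //.
  + rewrite /= lebesgue_measure_itv; case: ifP => // _.
    by rewrite /= -EFinD ltry.
  + exists `|tailG P X t|; split => // M M1 x _ /=.
    exact: ltW.
- by apply: tailG_int; rewrite ?bnd_simp.
- move=> x /=; rewrite in_itv /= => /andP[_ xt].
  exact: tailG_noninc.
Qed.

Lemma tailG_beyond (X : {RV P >-> R}) f alpha (b v : R) :
  is_density X f -> (forall x, ~ supp_int alpha b%:E x -> f x = 0) ->
  b < v -> tailG P X v = 0.
Proof.
move=> dens f0 bv; rewrite /tailG tailG_set dens ?measurable_itv //.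
rewrite integral0_eq // => x; rewrite /= in_itv /= andbT => vx.
rewrite f0 // => -[_]; rewrite lee_fin => xb.
by move: (lt_le_trans bv (le_trans vx xb)); rewrite ltxx.
Qed.

Lemma main_lem (Xa Xb : {RV P >-> R}) fa r : weakly_regular Xa fa ->
  forall u, 0 <= u ->
  0 < fa u * (cumH P Xb u - r) - tailG P Xb u * tailG P Xa u ->
  forall v, u < v ->
  0 <= fa v * (cumH P Xb v - r) - tailG P Xb v * tailG P Xa v.
Proof.
move=> [_ [alpha [beta [a0 ab dens _ [fpos f0 mono]]]]] u u0 Ku v uv.
have Gau := tailG_ge0 Xa u; have Gbu := tailG_ge0 Xb u.
have Gav := tailG_ge0 Xa v; have Gbv := tailG_ge0 Xb v.
have [su|nsu] := pselect (supp_int alpha beta u); last first.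
  by move: Ku; rewrite f0 // mul0r sub0r oppr_gt0 ltNge mulr_ge0.
have [sv|nsv] := pselect (supp_int alpha beta v); last first.
  clear fpos; case: beta ab dens f0 mono su nsv => [b| |] //= ab dens f0 mono su nsv.
  - have bv : b < v.
      rewrite ltNge; apply/negP => vb; apply: nsv; split => //.
      by [exact: (le_trans su.1 (ltW uv))|]; try by rewrite leey.
    by rewrite f0 // (@tailG_beyond Xa fa alpha b v dens f0 bv) mul0r mulr0 subr0.
  - by case: nsv; split => //; [exact: (le_trans su.1 (ltW uv))|]; try by rewrite leey.
have fu := fpos _ su; have fv := fpos _ sv.
have hm := mono _ _ su sv (ltW uv).
have hH := @cumH_incr Xb u v u0 (ltW uv).
have hG : tailG P Xb v <= tailG P Xb u by apply: tailG_noninc; exact: ltW.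
set au := tailG P Xa u / fa u in hm.
set av := tailG P Xa v / fa v in hm.
have eu : tailG P Xa u = au * fa u by rewrite /au divfK // gt_eqF.
have ev : tailG P Xa v = av * fa v by rewrite /av divfK // gt_eqF.
have au0 : 0 <= au by rewrite /au divr_ge0 // ltW.
move: Ku; rewrite eu ev.
set Hu := cumH P Xb u in hH *; set Hv := cumH P Xb v in hH *.
set gu := tailG P Xb u in hG Gbu *; set gv := tailG P Xb v in hG Gbv hH *.
have -> : fa u * (Hu - r) - gu * (au * fa u) = fa u * (Hu - r - gu * au).
  by ring.
have -> : fa v * (Hv - r) - gv * (av * fa v) = fa v * (Hv - r - gv * av).
  by ring.
rewrite pmulr_rgt0 // => Lu.
apply: mulr_ge0; first exact: ltW.
have h1 : gv * av <= gv * (au + (v - u)).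
  by apply: ler_wpM2l => //; lra.
have h2 : gv * au <= gu * au by apply: ler_wpM2r.
nra.
Qed.
End Helpers.

Theorem lemma3 (R : realType) (d : measure_display) (T : measurableType d)
  (P : probability T R) (X1 X2 : {RV P >-> R}) (f1 f2 : R -> R) :
  weakly_regular X1 f1 -> weakly_regular X2 f2 ->
  let G1 := tailG P X1 in let G2 := tailG P X2 in
  let K1 := fun t => f2 t * (cumH P X1 t - max_rev P X1) - G1 t * G2 t in
  let K2 := fun t => f1 t * (cumH P X2 t - max_rev P X2) - G1 t * G2 t in
  (forall u : R, 0 <= u -> 0 < K1 u -> forall v : R, u < v -> 0 <= K1 v) /\
  (forall u : R, 0 <= u -> 0 < K2 u -> forall v : R, u < v -> 0 <= K2 v).
Proof.
move=> w1 w2 G1 G2 K1 K2; split.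
- move=> u u0 Ku v uv.
  exact: (@main_lem _ _ _ P X2 X1 f2 _ w2 u u0 Ku v uv).
- move=> u u0 Ku v uv; rewrite /K2 /G1 /G2 (mulrC (tailG P X1 v)).
  apply: (@main_lem _ _ _ P X1 X2 f1 _ w1 u u0 _ v uv).
  by move: Ku; rewrite /K2 /G1 /G2 (mulrC (tailG P X1 u)).
Qed.
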